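(* Let $T$ be a complete theory and $\varphi(x;y)$ a formula whose characteristic sequence $\langle P_n\rangle$ has an $(\omega,2)$-array. Then $\alpha(n)\geq\lfloor n/2\rfloor$ for all $n$.
   Context: The characteristic sequence: $P_n(y_1,\dots,y_n):=\exists x\bigwedge_{i\le n}\varphi(x;y_i)$, interpreted in a sufficiently saturated model of $T$; standing assumption $T\vdash\forall y\exists z\forall x(\varphi(x;z)\leftrightarrow\neg\varphi(x;y))$. An $(\omega,2)$-array is $\langle a^t_i:t<2,i<\omega\rangle\subseteq P_1$ such that for all $n<\omega$, $P_n(a^{t_1}_{i_1},\dots,a^{t_n}_{i_n})$ holds iff for all $j,\ell\le n$, $i_j=i_\ell$ implies $t_j=t_\ell$. For finite $X\subseteq P_1$, $\hat e(X)$ is the number of unordered pairs of distinct $x,y\in X$ with $\neg P_2(x,y)$, and $\alpha(n)=\max\{\hat e(X):X\subseteq P_1,|X|=n\}$. *)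

(* Defs.v *)
From Stdlib Require Import Arith List Classical ClassicalEpsilon.
Import ListNotations.

(* A formula phi(x;y) interpreted in a model: X is the sort of (tuples of) the
   object variable x, Y the sort of (tuples of) the parameter variable y,
   and phi : X -> Y -> Prop is its interpretation. *)

(* Characteristic sequence: P_n(y_1,...,y_n) := exists x, /\_i phi(x;y_i).
   A tuple (y_1,...,y_n) is represented by the list [y_1;...;y_n]. *)
Definition charP {X Y : Type} (phi : X -> Y -> Prop) (ys : list Y) : Prop :=
  exists x, forall y, In y ys -> phi x y.

Definition P1 {X Y : Type} (phi : X -> Y -> Prop) (y : Y) : Prop := charP phi [y].
Definition P2 {X Y : Type} (phi : X -> Y -> Prop) (y z : Y) : Prop := charP phi [y; z].

Definition has_negation_instances {X Y : Type} (phi : X -> Y -> Prop) : Prop :=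
  forall y, exists z, forall x, phi x z <-> ~ phi x y.

(* (omega,2)-array <a^t_i : t<2, i<omega>, with t<2 coded by bool.
   A finite sequence (a^{t_1}_{i_1},...,a^{t_n}_{i_n}) is coded by the list of
   index pairs [(t_1,i_1);...;(t_n,i_n)]. *)
Definition is_omega2_array {X Y : Type} (phi : X -> Y -> Prop)
    (a : bool -> nat -> Y) : Prop :=
  (forall t i, P1 phi (a t i)) /\
  (forall s : list (bool * nat),
     charP phi (map (fun p => a (fst p) (snd p)) s) <->
     (forall p q, In p s -> In q s -> snd p = snd q -> fst p = fst q)).

Definition has_omega2_array {X Y : Type} (phi : X -> Y -> Prop) : Prop :=
  exists a : bool -> nat -> Y, is_omega2_array phi a.

(* ehat(X): number of unordered pairs of distinct elements x,y of X with
   ~P_2(x,y); a finite set X is given by a duplicate-free list, so the pairs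
   are exactly the pairs of positions i < j. *)
Fixpoint ehat {X Y : Type} (phi : X -> Y -> Prop) (l : list Y) : nat :=
  match l with
  | [] => 0
  | y :: l' =>
      length (filter (fun z => if excluded_middle_informative (P2 phi y z)
                               then false else true) l')
      + ehat phi l'
  end.

Definition ehat_value {X Y : Type} (phi : X -> Y -> Prop) (n k : nat) : Prop :=
  exists l : list Y, NoDup l /\ length l = n /\ Forall (P1 phi) l /\ ehat phi l = k.

(* alpha(n) = max { ehat(X) : X subset of P_1, |X| = n } (chosen classically;
   defaults to 0 if this maximum does not exist). *)
Definition alpha {X Y : Type} (phi : X -> Y -> Prop) (n : nat) : nat :=
  epsilon (inhabits 0)
    (fun k => ehat_value phi n k /\ forall k', ehat_value phi n k' -> k' <= k).

(* Main.v *)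
Require Import Defs.
From Stdlib Require Import Arith List Lia Classical ClassicalEpsilon.
Import ListNotations.

Lemma arr_inj {X Y : Type} (phi : X -> Y -> Prop) a :
  is_omega2_array phi a -> forall t i t' j, a t i = a t' j -> t = t' /\ i = j.
Proof.
  intros [H1 H2] t i t' j E.
  destruct (Nat.eq_dec i j) as [<-|Hij].
  - split; auto.
    destruct (Bool.bool_dec t t') as [|Ht]; auto. exfalso.
    assert (C : charP phi (map (fun p => a (fst p) (snd p)) [(t,i);(t',i)])).
    { destruct (H1 t i) as [x Hx]. exists x. simpl. rewrite <- E.
      intros y [<-|[<-|[]]]; apply Hx; simpl; auto. }
    pose proof (proj1 (H2 [(t,i);(t',i)]) C) as C2. apply Ht. apply (C2 (t,i) (t',i)); simpl; auto.
  - exfalso.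
    assert (C : charP phi (map (fun p => a (fst p) (snd p)) [(t,i);(negb t',j)])).
    { apply (proj2 (H2 _)). simpl. intros p q [<-|[<-|[]]] [<-|[<-|[]]]; simpl; intros; try lia; auto. }
    simpl in C. rewrite E in C.
    assert (C' : charP phi (map (fun p => a (fst p) (snd p)) [(t',j);(negb t',j)])) by exact C.
    pose proof (proj1 (H2 [(t',j);(negb t',j)]) C') as C2. specialize (C2 (t',j) (negb t',j)). simpl in C'.
    destruct t'; simpl in C2; discriminate C2; auto.
Qed.

Fixpoint L {Y} (a : bool -> nat -> Y) (m : nat) : list Y :=
  match m with 0 => [] | S m' => a true m' :: a false m' :: L a m' end.

Lemma L_in {Y} (a : bool -> nat -> Y) m y : In y (L a m) -> exists t i, i < m /\ y = a t i.
Proof.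
  induction m; simpl; [tauto|].
  intros [<-|[<-|H]].
  - exists true, m; auto.
  - exists false, m; auto.
  - destruct (IHm H) as (t&i&?&?). exists t, i; split; [lia|auto].
Qed.

Lemma L_len {Y} (a : bool -> nat -> Y) m : length (L a m) = 2*m.
Proof. induction m; simpl; lia. Qed.

Lemma L_nodup {X Y} (phi : X -> Y -> Prop) a : is_omega2_array phi a -> forall m, NoDup (L a m).
Proof.
  intros Ha; induction m; simpl; constructor.
  - intros [E|Hin].
    + apply arr_inj with (1:=Ha) in E. destruct E; discriminate.
    + destruct (L_in a m _ Hin) as (t&i&?&E). apply arr_inj with (1:=Ha) in E. lia.
  - constructor; auto. intros Hin.
    destruct (L_in a m _ Hin) as (t&i&?&E). apply arr_inj with (1:=Ha) in E. lia.
Qed.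

Lemma L_P1 {X Y} (phi : X -> Y -> Prop) a : is_omega2_array phi a -> forall m, Forall (P1 phi) (L a m).
Proof.
  intros Ha; induction m; simpl; constructor; [apply Ha|constructor; auto; apply Ha].
Qed.

Lemma ehat_cons {X Y} (phi : X -> Y -> Prop) y l : ehat phi l <= ehat phi (y :: l).
Proof. simpl. lia. Qed.

Lemma L_ehat {X Y} (phi : X -> Y -> Prop) a : is_omega2_array phi a -> forall m, m <= ehat phi (L a m).
Proof.
  intros Ha; induction m; simpl; [lia|].
  destruct (excluded_middle_informative (P2 phi (a true m) (a false m))) as [HP|HP].
  - exfalso. destruct Ha as [_ H2].
    assert (C : charP phi (map (fun p => a (fst p) (snd p)) [(true,m);(false,m)])) by exact HP.
    pose proof (proj1 (H2 [(true,m);(false,m)]) C) as C2. specialize (C2 (true,m) (false,m)). simpl in C2.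
    discriminate C2; auto.
  - simpl. lia.
Qed.

Lemma ehat_bound {X Y} (phi : X -> Y -> Prop) l : ehat phi l <= length l * length l.
Proof.
  induction l; simpl; auto.
  pose proof (filter_length_le (fun z => if excluded_middle_informative (P2 phi a z) then false else true) l).
  nia.
Qed.

Lemma bounded_max (P : nat -> Prop) : forall B k0, P k0 -> (forall k, P k -> k <= B) ->
  exists k, P k /\ forall k', P k' -> k' <= k.
Proof.
  induction B; intros k0 H0 Hb.
  - exists k0; split; auto. intros k' Hk'. specialize (Hb _ Hk'). lia.
  - destruct (classic (P (S B))) as [HS|HS].
    + exists (S B); split; auto.
    + apply (IHB k0 H0). intros k Hk. specialize (Hb _ Hk).
      destruct (Nat.eq_dec k (S B)); [subst; contradiction|lia].
Qed.

Theorem mainTheorem10 (X Y : Type) (phi : X -> Y -> Prop) :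
  has_negation_instances phi ->
  has_omega2_array phi ->
  forall n : nat, n / 2 <= alpha phi n.
Proof.
  intros _ [a Ha] n.
  set (m := n / 2).
  assert (Hw : exists l, NoDup l /\ length l = n /\ Forall (P1 phi) l /\ m <= ehat phi l).
  { pose proof (Nat.div_mod n 2 ltac:(lia)) as Hd.
    pose proof (Nat.mod_upper_bound n 2 ltac:(lia)).
    destruct (n mod 2) as [|[|k]] eqn:Hm; [| |lia].
    - exists (L a m). repeat split.
      + eapply L_nodup; eauto.
      + rewrite L_len. unfold m. lia.
      + eapply L_P1; eauto.
      + eapply L_ehat; eauto.
    - exists (a true m :: L a m). repeat split.
      + constructor; [|eapply L_nodup; eauto].
        intros Hin. destruct (L_in a m _ Hin) as (t&i&?&E).
        apply arr_inj with (1:=Ha) in E. lia.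
      + simpl. rewrite L_len. unfold m. lia.
      + constructor; [apply Ha|eapply L_P1; eauto].
      + eapply Nat.le_trans; [eapply L_ehat; eauto|apply ehat_cons]. }
  destruct Hw as (l & H1 & H2 & H3 & H4).
  assert (Hex : exists k, (ehat_value phi n k /\ forall k', ehat_value phi n k' -> k' <= k)).
  { apply (bounded_max _ (n*n) (ehat phi l)).
    - exists l; auto.
    - intros k (l'&_&Hl'&_&<-). rewrite <- Hl'. apply ehat_bound. }
  unfold alpha.
  destruct (epsilon_spec (inhabits 0) _ Hex) as [_ Hmax].
  eapply Nat.le_trans; [exact H4|]. apply Hmax. exists l; auto.
Qed.
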